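(* Let $K$ be a field and let $C=[A\xrightarrow{u}B]$, $C'=[A'\xrightarrow{u'}B']$ be complexes of commutative group schemes over $K$. Let $P$ be a biextension of $(B,B')$ by $\mathbb G_m$, and let $\Sigma:(A\times A')\times P\to P$ be an $A\times A'$-linearization of $P$. Suppose that $u(K):A(K)\to B(K)$ and $u'(K):A'(K)\to B'(K)$ are injective. Then $\Sigma$ induces a quotient biextension $Q(K)$ of $(B(K)/A(K),\,B'(K)/A'(K))$ by $K^*$; namely, the set $Q(K)$ of orbits $[x]=\{\Sigma(a,a',x): a\in A(K),a'\in A'(K)\}$ of elements $x\in P(K)$ carries, via the projection, $K^*$-action and partial group laws induced from $P(K)$, the structure of a biextension of $(B(K)/A(K),\,B'(K)/A'(K))$ by $K^*$.
   Context: Here $B(K)/A(K)$ means $B(K)/u(A(K))$ and similarly for $B'(K)/A'(K)$. For a biextension $P$ of $(B,B')$ by $\mathbb G_m$, $+_1$ denotes the group law on the fibers $P_{b,B'}$ over $\{b\}\times B'$ and $+_2$ the group law on the fibers $P_{B,b'}$ over $B\times\{b'\}$. Let $\sigma:A\times B\to B$, $(a,b)\mapsto u(a)+b$, and $\sigma':A'\times B'\to B'$, $(a',b')\mapsto u'(a')+b'$. An $A\times A'$-linearization of $P$ is an action $\Sigma:(A\times A')\times P\to P$ of the group $A\times A'$ on $P$ such that: (i) $\Sigma(a,a',c+x)=c+\Sigma(a,a',x)$ for $c\in\mathbb G_m$; (ii) if $x$ lies above $(b,b')$ then $\Sigma(a,a',x)$ lies above $(\sigma(a,b),\sigma'(a',b'))$;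 (iii) for $a\in A$, $a'_1,a'_2\in A'$ and $x_1,x_2$ above the same $b\in B$, $\Sigma(a,a'_1+a'_2,x_1+_1x_2)=\Sigma(a,a'_1,x_1)+_1\Sigma(a,a'_2,x_2)$, and for $a_1,a_2\in A$, $a'\in A'$ and $x_1,x_2$ above the same $b'\in B'$, $\Sigma(a_1+a_2,a',x_1+_2x_2)=\Sigma(a_1,a',x_1)+_2\Sigma(a_2,a',x_2)$. A biextension of abelian groups $(X,Y)$ by $H$ is a set $Q$ with a surjection onto $X\times Y$, a free $H$-action transitive on fibers, and partial group laws on the fibers over $\{x\}\times Y$ and over $X\times\{y\}$ making them extensions of $Y$ (resp. $X$) by $H$, compatible in the usual sense (Mumford/Grothendieck). *)

(* Defs.v *)
From HB Require Import structures.
From mathcomp Require Import all_boot all_order all_algebra.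
Set Implicit Arguments. Unset Strict Implicit. Unset Printing Implicit Defensive.
Import Order.TTheory GRing.Theory Num.Theory.
Local Open Scope ring_scope.

(* A biextension of the abelian groups (X, Y) by the multiplicative group
   K^* of a field K, in the sense of Mumford/Grothendieck:
   - bpr : Q -> X * Y a surjection,
   - bact c : action of c in K^* (only c != 0 is meaningful), free and
     transitive on the fibres of bpr,
   - badd1 : partial group law on the fibres over {x} x Y (only used on
     pairs with equal first projection), making each such fibre a
     commutative extension of Y by K^*,
   - badd2 : same on the fibres over X x {y},
   - the two partial laws are compatible. *)
Record biext (K : fieldType) (X Y : zmodType) (Q : Type) := Biext {
  bpr : Q -> X * Y;
  bact : K -> Q -> Q;
  badd1 : Q -> Q -> Q;
  badd2 : Q -> Q -> Q;
  bpr_surj : forall xy : X * Y, exists q, bpr q = xy;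
  bact_pr : forall c q, c != 0 -> bpr (bact c q) = bpr q;
  bact1 : forall q, bact 1 q = q;
  bactM : forall c d q, c != 0 -> d != 0 -> bact (c * d) q = bact c (bact d q);
  bact_free : forall c q, c != 0 -> bact c q = q -> c = 1;
  bact_trans : forall q q', bpr q = bpr q' -> exists2 c, c != 0 & q' = bact c q;
  badd1_pr : forall q1 q2, (bpr q1).1 = (bpr q2).1 ->
    bpr (badd1 q1 q2) = ((bpr q1).1, (bpr q1).2 + (bpr q2).2);
  badd1A : forall q1 q2 q3, (bpr q1).1 = (bpr q2).1 -> (bpr q2).1 = (bpr q3).1 ->
    badd1 q1 (badd1 q2 q3) = badd1 (badd1 q1 q2) q3;
  badd1C : forall q1 q2, (bpr q1).1 = (bpr q2).1 -> badd1 q1 q2 = badd1 q2 q1;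
  badd1_unit : forall x : X, exists e, bpr e = (x, 0) /\
    forall q, (bpr q).1 = x ->
      badd1 e q = q /\ exists2 q', (bpr q').1 = x & badd1 q q' = e;
  badd1_act : forall c q1 q2, c != 0 -> (bpr q1).1 = (bpr q2).1 ->
    badd1 (bact c q1) q2 = bact c (badd1 q1 q2);
  badd2_pr : forall q1 q2, (bpr q1).2 = (bpr q2).2 ->
    bpr (badd2 q1 q2) = ((bpr q1).1 + (bpr q2).1, (bpr q1).2);
  badd2A : forall q1 q2 q3, (bpr q1).2 = (bpr q2).2 -> (bpr q2).2 = (bpr q3).2 ->
    badd2 q1 (badd2 q2 q3) = badd2 (badd2 q1 q2) q3;
  badd2C : forall q1 q2, (bpr q1).2 = (bpr q2).2 -> badd2 q1 q2 = badd2 q2 q1;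
  badd2_unit : forall y : Y, exists e, bpr e = (0, y) /\
    forall q, (bpr q).2 = y ->
      badd2 e q = q /\ exists2 q', (bpr q').2 = y & badd2 q q' = e;
  badd2_act : forall c q1 q2, c != 0 -> (bpr q1).2 = (bpr q2).2 ->
    badd2 (bact c q1) q2 = bact c (badd2 q1 q2);
  badd_compat : forall q11 q12 q21 q22,
    (bpr q11).1 = (bpr q12).1 -> (bpr q21).1 = (bpr q22).1 ->
    (bpr q11).2 = (bpr q21).2 -> (bpr q12).2 = (bpr q22).2 ->
    badd2 (badd1 q11 q12) (badd1 q21 q22) = badd1 (badd2 q11 q21) (badd2 q12 q22)
}.

Definition linearization (K : fieldType) (A B A' B' : zmodType)
  (u : {additive A -> B}) (u' : {additive A' -> B'}) (P : Type)
  (E : biext K B B' P) (S : A -> A' -> P -> P) : Prop :=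
  (forall x, S 0 0 x = x) /\
  (forall a1 a2 a1' a2' x, S (a1 + a2) (a1' + a2') x = S a1 a1' (S a2 a2' x)) /\
  (forall a a' c x, c != 0 -> S a a' (bact E c x) = bact E c (S a a' x)) /\
  (forall a a' x, bpr E (S a a' x) = (u a + (bpr E x).1, u' a' + (bpr E x).2)) /\
  (forall a a'1 a'2 x1 x2, (bpr E x1).1 = (bpr E x2).1 ->
     S a (a'1 + a'2) (badd1 E x1 x2) = badd1 E (S a a'1 x1) (S a a'2 x2)) /\
  (forall a1 a2 a' x1 x2, (bpr E x1).2 = (bpr E x2).2 ->
     S (a1 + a2) a' (badd2 E x1 x2) = badd2 E (S a1 a' x1) (S a2 a' x2)).

Definition orbitS (A A' P : Type) (S : A -> A' -> P -> P) (x : P) : P -> Prop :=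
  fun y => exists a a', y = S a a' x.

Definition orbits (A A' P : Type) (S : A -> A' -> P -> P) : Type :=
  { O : P -> Prop | exists x, O = orbitS S x }.

Definition orbit_of (A A' P : Type) (S : A -> A' -> P -> P) (x : P) : orbits S :=
  exist _ (orbitS S x) (ex_intro _ x erefl).

(* Main.v *)
Require Import Defs.
From HB Require Import structures.
From mathcomp Require Import all_boot all_order all_algebra.
From Stdlib Require Import ProofIrrelevance FunctionalExtensionality PropExtensionality ClassicalEpsilon.
Set Implicit Arguments. Unset Strict Implicit.
Import GRing.Theory.
Local Open Scope ring_scope.

Definition rep (A A' P : Type) (S : A -> A' -> P -> P) (O : orbits S) : P :=
  proj1_sig (constructive_indefinite_description _ (proj2_sig O)).

Lemma rep_spec (A A' P : Type) (S : A -> A' -> P -> P) (O : orbits S) :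
  orbit_of S (rep O) = O.
Proof.
apply: eq_sig_hprop => [x p1 p2|]; first exact: proof_irrelevance.
rewrite /rep /=; case: (constructive_indefinite_description _ _) => x hx /=.
by rewrite hx.
Qed.

Lemma orb_eq (A A' P : Type) (S : A -> A' -> P -> P) x y :
  orbitS S x = orbitS S y -> orbit_of S x = orbit_of S y.
Proof.
move=> e; apply: eq_sig_hprop => [z p1 p2|]; first exact: proof_irrelevance.
exact: e.
Qed.

Lemma orbit_of_S (A A' : zmodType) (P : Type) (S : A -> A' -> P -> P)
  (H0 : forall x, S 0 0 x = x)
  (HM : forall a1 a2 a1' a2' x, S (a1 + a2) (a1' + a2') x = S a1 a1' (S a2 a2' x))
  a a' x : orbit_of S (S a a' x) = orbit_of S x.
Proof.
apply: orb_eq; apply: functional_extensionality => y.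
apply: propositional_extensionality; split.
- case=> b [b' ->]; exists (b + a), (b' + a'); by rewrite HM.
- case=> b [b' ->]; exists (b - a), (b' - a'); by rewrite -HM !subrK.
Qed.

Lemma orbit_of_inv (A A' : zmodType) (P : Type) (S : A -> A' -> P -> P)
  (H0 : forall x, S 0 0 x = x) x y :
  orbit_of S x = orbit_of S y -> exists a a', y = S a a' x.
Proof.
move=> e; have e' := f_equal (@proj1_sig _ _) e; simpl in e'.
have : orbitS S y y by exists 0, 0; rewrite H0.
by rewrite -e'.
Qed.

Definition choose_pair (P : Type) (R : P -> P -> Prop) (d : P * P) : P * P :=
  match excluded_middle_informative (exists p : P * P, R p.1 p.2) with
  | left h => proj1_sig (constructive_indefinite_description _ h)
  | right _ => d end.

Lemma choose_pair_spec (P : Type) (R : P -> P -> Prop) d :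
  (exists x y, R x y) -> R (choose_pair R d).1 (choose_pair R d).2.
Proof.
move=> [x [y h]]; rewrite /choose_pair.
case: excluded_middle_informative => [h'|n].
  by case: (constructive_indefinite_description _ _).
by exfalso; apply: n; exists (x, y).
Qed.

Theorem proposition3p4
  (K : fieldType) (A B A' B' : zmodType)
  (u : {additive A -> B}) (u' : {additive A' -> B'})
  (P : Type) (E : biext K B B' P) (S : A -> A' -> P -> P)
  (* B(K)/A(K) and B'(K)/A'(K), given as cokernels of u and u' *)
  (X X' : zmodType) (q : {additive B -> X}) (q' : {additive B' -> X'})
  (hq_surj : forall x : X, exists b, q b = x)
  (hq_ker : forall b, q b = 0 <-> exists a, b = u a)
  (hq'_surj : forall x : X', exists b, q' b = x)
  (hq'_ker : forall b, q' b = 0 <-> exists a, b = u' a) :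
  linearization u u' E S ->
  injective u -> injective u' ->
  exists F : biext K X X' (orbits S),
    (forall x, bpr F (orbit_of S x) = (q (bpr E x).1, q' (bpr E x).2)) /\
    (forall c x, c != 0 -> bact F c (orbit_of S x) = orbit_of S (bact E c x)) /\
    (forall x1 x2, (bpr E x1).1 = (bpr E x2).1 ->
       badd1 F (orbit_of S x1) (orbit_of S x2) = orbit_of S (badd1 E x1 x2)) /\
    (forall x1 x2, (bpr E x1).2 = (bpr E x2).2 ->
       badd2 F (orbit_of S x1) (orbit_of S x2) = orbit_of S (badd2 E x1 x2)).
Proof.
move=> [H0 [HM [Hi [Hii [Hiii1 Hiii2]]]]] uinj u'inj.
have oS := orbit_of_S H0 HM.
have oI := orbit_of_inv H0.
have orbS : forall O : orbits S, exists x, O = orbit_of S x.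
  by move=> O; exists (rep O); rewrite rep_spec.
have qu : forall a, q (u a) = 0 by move=> a; apply/hq_ker; exists a.
have qu' : forall a, q' (u' a) = 0 by move=> a; apply/hq'_ker; exists a.
have adj : forall x b b', q (bpr E x).1 = q b -> q' (bpr E x).2 = q' b' ->
    exists y, orbit_of S y = orbit_of S x /\ bpr E y = (b, b').
  move=> x b b' e1 e2.
  have [a ha] : exists a, b - (bpr E x).1 = u a by apply/hq_ker; rewrite raddfB e1 subrr.
  have [a' ha'] : exists a', b' - (bpr E x).2 = u' a' by apply/hq'_ker; rewrite raddfB e2 subrr.
  exists (S a a' x); split; first exact: oS.
  by rewrite Hii -ha -ha' !subrK.
pose bprF := fun O : orbits S => (q (bpr E (rep O)).1, q' (bpr E (rep O)).2).
pose bactF := fun c (O : orbits S) => orbit_of S (bact E c (rep O)).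
pose badd1F := fun O1 O2 : orbits S =>
  let p := choose_pair (fun x1 x2 => orbit_of S x1 = O1 /\ orbit_of S x2 = O2 /\
                          (bpr E x1).1 = (bpr E x2).1) (rep O1, rep O1) in
  orbit_of S (badd1 E p.1 p.2).
pose badd2F := fun O1 O2 : orbits S =>
  let p := choose_pair (fun x1 x2 => orbit_of S x1 = O1 /\ orbit_of S x2 = O2 /\
                          (bpr E x1).2 = (bpr E x2).2) (rep O1, rep O1) in
  orbit_of S (badd2 E p.1 p.2).
have L_bpr : forall x, bprF (orbit_of S x) = (q (bpr E x).1, q' (bpr E x).2).
  move=> x; rewrite /bprF.
  have [a [a' ->]] := oI _ _ (esym (rep_spec (orbit_of S x))).
  by rewrite Hii /= !raddfD qu qu' !add0r.
have L_bact : forall c x, c != 0 -> bactF c (orbit_of S x) = orbit_of S (bact E c x).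
  move=> c x c0; rewrite /bactF.
  have [a [a' ->]] := oI _ _ (esym (rep_spec (orbit_of S x))).
  by rewrite -Hi // oS.
have L_badd1 : forall x1 x2, (bpr E x1).1 = (bpr E x2).1 ->
    badd1F (orbit_of S x1) (orbit_of S x2) = orbit_of S (badd1 E x1 x2).
  move=> x1 x2 e; rewrite /badd1F /=.
  move: (@choose_pair_spec P (fun y1 y2 => orbit_of S y1 = orbit_of S x1 /\
     orbit_of S y2 = orbit_of S x2 /\ (bpr E y1).1 = (bpr E y2).1)
     (rep (orbit_of S x1), rep (orbit_of S x1))).
  set p := choose_pair _ _.
  case; first by exists x1, x2.
  move=> e1 [e2 e3].
  move: e3; have [a1 [a1' ->]] := oI _ _ (esym e1).
  have [a2 [a2' ->]] := oI _ _ (esym e2).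
  rewrite !Hii /= e => /addIr /uinj <-.
  by rewrite -Hiii1 // oS.
have L_badd2 : forall x1 x2, (bpr E x1).2 = (bpr E x2).2 ->
    badd2F (orbit_of S x1) (orbit_of S x2) = orbit_of S (badd2 E x1 x2).
  move=> x1 x2 e; rewrite /badd2F /=.
  move: (@choose_pair_spec P (fun y1 y2 => orbit_of S y1 = orbit_of S x1 /\
     orbit_of S y2 = orbit_of S x2 /\ (bpr E y1).2 = (bpr E y2).2)
     (rep (orbit_of S x1), rep (orbit_of S x1))).
  set p := choose_pair _ _.
  case; first by exists x1, x2.
  move=> e1 [e2 e3].
  move: e3; have [a1 [a1' ->]] := oI _ _ (esym e1).
  have [a2 [a2' ->]] := oI _ _ (esym e2).
  rewrite !Hii /= e => /addIr /u'inj <-.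
  by rewrite -Hiii2 // oS.
have F_surj : forall xy : X * X', exists O, bprF O = xy.
  case=> x x'; have [b hb] := hq_surj x; have [b' hb'] := hq'_surj x'.
  have [p hp] := bpr_surj E (b, b').
  by exists (orbit_of S p); rewrite L_bpr hp /= hb hb'.
have F_actpr : forall c O, c != 0 -> bprF (bactF c O) = bprF O.
  move=> c O c0; have [x ->] := orbS O.
  by rewrite L_bact // !L_bpr bact_pr.
have F_act1 : forall O, bactF 1 O = O.
  by move=> O; rewrite /bactF bact1 rep_spec.
have F_actM : forall c d O, c != 0 -> d != 0 -> bactF (c * d) O = bactF c (bactF d O).
  move=> c d O c0 d0; have [x ->] := orbS O.
  by rewrite L_bact ?mulf_neq0 // L_bact // L_bact // bactM.
have F_free : forall c O, c != 0 -> bactF c O = O -> c = 1.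
  move=> c O c0; have [x ->] := orbS O.
  rewrite L_bact // => /oI [a [a' ex]].
  have h := f_equal (bpr E) ex; rewrite Hii bact_pr // in h.
  have e1 := congr1 fst h; have e2 := congr1 snd h; simpl in e1, e2.
  have ua : u a = 0 by apply: (addIr (bpr E x).1); rewrite add0r -e1.
  have ua' : u' a' = 0 by apply: (addIr (bpr E x).2); rewrite add0r -e2.
  have a0 : a = 0 by apply: uinj; rewrite ua raddf0.
  have a0' : a' = 0 by apply: u'inj; rewrite ua' raddf0.
  rewrite a0 a0' H0 in ex.
  by apply: (@bact_free _ _ _ _ E c x c0); rewrite -ex.
have F_trans : forall O O', bprF O = bprF O' -> exists2 c, c != 0 & O' = bactF c O.
  move=> O O'; have [x ->] := orbS O; have [y ->] := orbS O'.
  rewrite !L_bpr => h.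
  have e1 := congr1 fst h; have e2 := congr1 snd h; simpl in e1, e2.
  have [z [ez hz]] := adj x (bpr E y).1 (bpr E y).2 e1 e2.
  have hzy : bpr E z = bpr E y by rewrite hz -surjective_pairing.
  have [c c0 ->] := bact_trans hzy.
  by exists c => //; rewrite -ez L_bact.
have F1_pr : forall O1 O2, (bprF O1).1 = (bprF O2).1 ->
    bprF (badd1F O1 O2) = ((bprF O1).1, (bprF O1).2 + (bprF O2).2).
  move=> O1 O2; have [x1 ->] := orbS O1; have [x2 ->] := orbS O2.
  move=> h; rewrite !L_bpr /= in h.
  have [y2 [<- hy]] := adj x2 (bpr E x1).1 (bpr E x2).2 (esym h) erefl.
  have hy1 : (bpr E x1).1 = (bpr E y2).1 by rewrite hy.
  by rewrite L_badd1 // !L_bpr badd1_pr //= raddfD.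
have F2_pr : forall O1 O2, (bprF O1).2 = (bprF O2).2 ->
    bprF (badd2F O1 O2) = ((bprF O1).1 + (bprF O2).1, (bprF O1).2).
  move=> O1 O2; have [x1 ->] := orbS O1; have [x2 ->] := orbS O2.
  move=> h; rewrite !L_bpr /= in h.
  have [y2 [<- hy]] := adj x2 (bpr E x2).1 (bpr E x1).2 erefl (esym h).
  have hy1 : (bpr E x1).2 = (bpr E y2).2 by rewrite hy.
  by rewrite L_badd2 // !L_bpr badd2_pr //= raddfD.
have F1_A : forall O1 O2 O3, (bprF O1).1 = (bprF O2).1 -> (bprF O2).1 = (bprF O3).1 ->
    badd1F O1 (badd1F O2 O3) = badd1F (badd1F O1 O2) O3.
  move=> O1 O2 O3; have [x1 ->] := orbS O1; have [x2 ->] := orbS O2.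
  have [x3 ->] := orbS O3.
  move=> h12 h23; rewrite !L_bpr /= in h12 h23.
  have [y2 [<- hy2]] := adj x2 (bpr E x1).1 (bpr E x2).2 (esym h12) erefl.
  have [y3 [<- hy3]] := adj x3 (bpr E x1).1 (bpr E x3).2 ltac:(by rewrite -h23 h12) erefl.
  have e2 : (bpr E x1).1 = (bpr E y2).1 by rewrite hy2.
  have e3 : (bpr E x1).1 = (bpr E y3).1 by rewrite hy3.
  have e23 : (bpr E y2).1 = (bpr E y3).1 by rewrite -e2.
  rewrite (L_badd1 _ _ e23) (L_badd1 _ _ e2) L_badd1; last by rewrite badd1_pr.
  rewrite L_badd1; last by rewrite badd1_pr.
  by rewrite badd1A.
have F2_A : forall O1 O2 O3, (bprF O1).2 = (bprF O2).2 -> (bprF O2).2 = (bprF O3).2 ->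
    badd2F O1 (badd2F O2 O3) = badd2F (badd2F O1 O2) O3.
  move=> O1 O2 O3; have [x1 ->] := orbS O1; have [x2 ->] := orbS O2.
  have [x3 ->] := orbS O3.
  move=> h12 h23; rewrite !L_bpr /= in h12 h23.
  have [y2 [<- hy2]] := adj x2 (bpr E x2).1 (bpr E x1).2 erefl (esym h12).
  have [y3 [<- hy3]] := adj x3 (bpr E x3).1 (bpr E x1).2 erefl ltac:(by rewrite -h23 h12).
  have e2 : (bpr E x1).2 = (bpr E y2).2 by rewrite hy2.
  have e3 : (bpr E x1).2 = (bpr E y3).2 by rewrite hy3.
  have e23 : (bpr E y2).2 = (bpr E y3).2 by rewrite -e2.
  rewrite (L_badd2 _ _ e23) (L_badd2 _ _ e2) L_badd2; last by rewrite badd2_pr.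
  rewrite L_badd2; last by rewrite badd2_pr.
  by rewrite badd2A.
have F1_C : forall O1 O2, (bprF O1).1 = (bprF O2).1 -> badd1F O1 O2 = badd1F O2 O1.
  move=> O1 O2; have [x1 ->] := orbS O1; have [x2 ->] := orbS O2.
  move=> h; rewrite !L_bpr /= in h.
  have [y2 [<- hy]] := adj x2 (bpr E x1).1 (bpr E x2).2 (esym h) erefl.
  have hy1 : (bpr E x1).1 = (bpr E y2).1 by rewrite hy.
  by rewrite !L_badd1 // badd1C.
have F2_C : forall O1 O2, (bprF O1).2 = (bprF O2).2 -> badd2F O1 O2 = badd2F O2 O1.
  move=> O1 O2; have [x1 ->] := orbS O1; have [x2 ->] := orbS O2.
  move=> h; rewrite !L_bpr /= in h.
  have [y2 [<- hy]] := adj x2 (bpr E x2).1 (bpr E x1).2 erefl (esym h).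
  have hy1 : (bpr E x1).2 = (bpr E y2).2 by rewrite hy.
  by rewrite !L_badd2 // badd2C.
have F1_unit : forall x : X, exists e, bprF e = (x, 0) /\
    forall O, (bprF O).1 = x ->
      badd1F e O = O /\ exists2 O', (bprF O').1 = x & badd1F O O' = e.
  move=> x; have [b hb] := hq_surj x; have [eE [heE HeE]] := badd1_unit E b.
  exists (orbit_of S eE); split; first by rewrite L_bpr heE /= hb raddf0.
  move=> O; have [y ->] := orbS O; rewrite L_bpr /= => hy.
  have [z [<- hz]] := adj y b (bpr E y).2 ltac:(by rewrite hy hb) erefl.
  have hz1 : (bpr E z).1 = b by rewrite hz.
  have [h1 [z' hz' h2]] := HeE z hz1.
  split; first by rewrite L_badd1 ?h1 // heE hz1.
  have hb2 : (bprF (orbit_of S z')).1 = x by rewrite L_bpr /= hz' hb.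
  apply: (ex_intro2 _ _ (orbit_of S z') hb2).
  by rewrite L_badd1 ?h2 // hz1 hz'.
have F2_unit : forall x : X', exists e, bprF e = (0, x) /\
    forall O, (bprF O).2 = x ->
      badd2F e O = O /\ exists2 O', (bprF O').2 = x & badd2F O O' = e.
  move=> x; have [b hb] := hq'_surj x; have [eE [heE HeE]] := badd2_unit E b.
  exists (orbit_of S eE); split; first by rewrite L_bpr heE /= hb raddf0.
  move=> O; have [y ->] := orbS O; rewrite L_bpr /= => hy.
  have [z [<- hz]] := adj y (bpr E y).1 b erefl ltac:(by rewrite hy hb).
  have hz1 : (bpr E z).2 = b by rewrite hz.
  have [h1 [z' hz' h2]] := HeE z hz1.
  split; first by rewrite L_badd2 ?h1 // heE hz1.
  have hb2 : (bprF (orbit_of S z')).2 = x by rewrite L_bpr /= hz' hb.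
  apply: (ex_intro2 _ _ (orbit_of S z') hb2).
  by rewrite L_badd2 ?h2 // hz1 hz'.
have F1_act : forall c O1 O2, c != 0 -> (bprF O1).1 = (bprF O2).1 ->
    badd1F (bactF c O1) O2 = bactF c (badd1F O1 O2).
  move=> c O1 O2 c0; have [x1 ->] := orbS O1; have [x2 ->] := orbS O2.
  move=> h; rewrite !L_bpr /= in h.
  have [y2 [<- hy]] := adj x2 (bpr E x1).1 (bpr E x2).2 (esym h) erefl.
  have hy1 : (bpr E x1).1 = (bpr E y2).1 by rewrite hy.
  rewrite L_bact // L_badd1; last by rewrite bact_pr.
  by rewrite L_badd1 // L_bact // badd1_act.
have F2_act : forall c O1 O2, c != 0 -> (bprF O1).2 = (bprF O2).2 ->
    badd2F (bactF c O1) O2 = bactF c (badd2F O1 O2).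
  move=> c O1 O2 c0; have [x1 ->] := orbS O1; have [x2 ->] := orbS O2.
  move=> h; rewrite !L_bpr /= in h.
  have [y2 [<- hy]] := adj x2 (bpr E x2).1 (bpr E x1).2 erefl (esym h).
  have hy1 : (bpr E x1).2 = (bpr E y2).2 by rewrite hy.
  rewrite L_bact // L_badd2; last by rewrite bact_pr.
  by rewrite L_badd2 // L_bact // badd2_act.
have F_compat : forall O11 O12 O21 O22,
    (bprF O11).1 = (bprF O12).1 -> (bprF O21).1 = (bprF O22).1 ->
    (bprF O11).2 = (bprF O21).2 -> (bprF O12).2 = (bprF O22).2 ->
    badd2F (badd1F O11 O12) (badd1F O21 O22) = badd1F (badd2F O11 O21) (badd2F O12 O22).
  move=> O11 O12 O21 O22.
  have [x11 ->] := orbS O11; have [x12 ->] := orbS O12.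
  have [x21 ->] := orbS O21; have [x22 ->] := orbS O22.
  move=> h1 h2 h3 h4; rewrite !L_bpr /= in h1 h2 h3 h4.
  have [y12 [<- hy12]] := adj x12 (bpr E x11).1 (bpr E x12).2 (esym h1) erefl.
  have [y21 [<- hy21]] := adj x21 (bpr E x21).1 (bpr E x11).2 erefl (esym h3).
  have [y22 [<- hy22]] := adj x22 (bpr E x21).1 (bpr E x12).2 (esym h2) (esym h4).
  have f1 : (bpr E x11).1 = (bpr E y12).1 by rewrite hy12.
  have f2 : (bpr E y21).1 = (bpr E y22).1 by rewrite hy21 hy22.
  have f3 : (bpr E x11).2 = (bpr E y21).2 by rewrite hy21.
  have f4 : (bpr E y12).2 = (bpr E y22).2 by rewrite hy12 hy22.
  rewrite (L_badd1 _ _ f1) (L_badd1 _ _ f2) (L_badd2 _ _ f3) (L_badd2 _ _ f4).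
  rewrite L_badd2; last by rewrite !badd1_pr //= f3 f4.
  rewrite L_badd1; last by rewrite !badd2_pr //= f1 f2.
  by rewrite badd_compat.
exists (Biext F_surj F_actpr F_act1 F_actM F_free F_trans F1_pr F1_A F1_C F1_unit F1_act
          F2_pr F2_A F2_C F2_unit F2_act F_compat).
split; first exact: L_bpr.
split; first exact: L_bact.
split; [exact: L_badd1 | exact: L_badd2].
Qed.
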